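(* Consider the finite configuration of height $3$ and type $(1,2,2,1)$ given by $$p_{0,1}=0,\ p_{1,1}=-\tfrac{\sqrt2}{2}+\mathrm{i},\ p_{1,2}=\tfrac{\sqrt2}{2}+\mathrm{i},\ p_{2,1}=-\tfrac{\sqrt2}{2}+2\mathrm{i},\ p_{2,2}=\tfrac{\sqrt2}{2}+2\mathrm{i},\ p_{3,1}=3\mathrm{i}.$$ This configuration is balanced, non-degenerate and has residual force $\frac{2}{3\mathrm{i}}$.
   Context: For a finite configuration $(p_{k,i})_{0\le k\le h,1\le i\le n_k}$ of type $(n_0,\ldots,n_h)$ with $n_0=n_h=1$: set $c_k=1/n_k$, $n_{-1}=n_{h+1}=0$, $u_{k,i}=p_{k,i}-p_{k,1}$, $\ell_k=p_{k,1}-p_{k-1,1}$; forces $F_{k,i}=2\sum_{j\neq i}\frac{c_k^2}{p_{k,i}-p_{k,j}}-\sum_{j=1}^{n_{k+1}}\frac{c_kc_{k+1}}{p_{k,i}-p_{k+1,j}}-\sum_{j=1}^{n_{k-1}}\frac{c_kc_{k-1}}{p_{k,i}-p_{k-1,j}}$ and $G_k=\sum_{i=1}^{n_k}\sum_{j=1}^{n_{k-1}}\frac{c_kc_{k-1}}{p_{k,i}-p_{k-1,j}}$ ($1\le k\le h$). Balanced means $F_{k,i}=0$ for $1\le k\le h-1$; the residual force is $F_{0,1}$; non-degenerate means the differential of the map $(\ell_1,u_{1,2},\ldots,u_{1,n_1},\ell_2,u_{2,2},\ldots,u_{2,n_2},\ell_3,\ldots,\ell_h)\mapsto(G_1,F_{1,2},\ldots,F_{1,n_1},G_2,F_{2,2},\ldots,F_{2,n_2},G_3,\ldots,G_h)$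 is an isomorphism. *)

(* Defs.v *)
From HB Require Import structures.
From mathcomp Require Import all_boot all_order all_algebra.
From mathcomp Require Import all_classical all_reals all_analysis.
From mathcomp Require Import complex.
Unset Printing Implicit Defensive.
Import Order.TTheory GRing.Theory Num.Theory.
Import numFieldNormedType.Exports.
Local Open Scope ring_scope.
Local Open Scope complex_scope.

(* A finite configuration of height h and type (n 0, ..., n h) is encoded by
   h : nat, n : nat -> nat and p : nat -> nat -> K, where p k i is p_{k,i}
   (0 <= k <= h, 1 <= i <= n k); values outside this range are irrelevant. *)
Section Forces.
Context {K : numFieldType}.

Definition cw (n : nat -> nat) (k : nat) : K := ((n k)%:R)^-1.

(* F_{k,i}; the conventions n_{-1} = n_{h+1} = 0 make the corresponding sums
   empty, which is what the guards (k < h) and (0 < k) implement. *)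
Definition Fforce (h : nat) (n : nat -> nat) (p : nat -> nat -> K)
    (k i : nat) : K :=
  2 * (\sum_(1 <= j < (n k).+1 | j != i) (cw n k) ^+ 2 / (p k i - p k j))
  - (if (k < h)%N then
       \sum_(1 <= j < (n k.+1).+1) cw n k * cw n k.+1 / (p k i - p k.+1 j)
     else 0)
  - (if (0 < k)%N then
       \sum_(1 <= j < (n k.-1).+1) cw n k * cw n k.-1 / (p k i - p k.-1 j)
     else 0).

Definition Gforce (n : nat -> nat) (p : nat -> nat -> K) (k : nat) : K :=
  \sum_(1 <= i < (n k).+1) \sum_(1 <= j < (n k.-1).+1)
     cw n k * cw n k.-1 / (p k i - p k.-1 j).

Definition cfg_balanced (h : nat) (n : nat -> nat) (p : nat -> nat -> K) : Prop :=
  forall k i, (1 <= k <= h.-1)%N -> (1 <= i <= n k)%N -> Fforce h n p k i = 0.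

Definition cfg_residual_force (h : nat) (n : nat -> nat) (p : nat -> nat -> K) : K :=
  Fforce h n p 0 1.

(* Labels of the coordinates, in the order
   (l_1, u_{1,2},...,u_{1,n_1}, l_2, u_{2,2},...,u_{2,n_2}, l_3, ..., l_h):
   (k,1) stands for l_k (resp. G_k), (k,i) with i >= 2 for u_{k,i}
   (resp. F_{k,i}); u's only occur for k <= h-1. *)
Definition var_labels (h : nat) (n : nat -> nat) : seq (nat * nat) :=
  flatten [seq (k, 1%N) :: (if (k < h)%N then [seq (k, i) | i <- iota 2 (n k).-1]
                            else [::])
          | k <- iota 1 h].

Definition nvars (h : nat) (n : nat -> nat) : nat := size (var_labels h n).

(* the m-th coordinate of a row vector (0 if out of range) *)
Definition coord_of {N : nat} (x : 'rV[K]_N) (m : nat) : K :=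
  nth 0 [seq x ord0 j | j <- enum 'I_N] m.

(* The configuration with coordinates x, based at p_{0,1}:
   p_{k,1} = p_{0,1} + l_1 + ... + l_k,  p_{k,i} = p_{k,1} + u_{k,i}. *)
Definition config_of (h : nat) (n : nat -> nat) (p01 : K)
    (x : 'rV[K]_(nvars h n)) : nat -> nat -> K :=
  fun k i =>
    p01 + \sum_(1 <= m < k.+1) coord_of x (index (m, 1%N) (var_labels h n))
        + (if i == 1%N then 0 else coord_of x (index (k, i) (var_labels h n))).

Definition force_map (h : nat) (n : nat -> nat) (p01 : K)
    (x : 'rV[K]_(nvars h n)) : 'rV[K]_(nvars h n) :=
  \row_(j < nvars h n)
     let ki := nth (0%N, 0%N) (var_labels h n) j in
     if ki.2 == 1%N then Gforce n (config_of h n p01 x) ki.1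
     else Fforce h n (config_of h n p01 x) ki.1 ki.2.

Definition cfg_coords (h : nat) (n : nat -> nat) (p : nat -> nat -> K)
    : 'rV[K]_(nvars h n) :=
  \row_(j < nvars h n)
     let ki := nth (0%N, 0%N) (var_labels h n) j in
     if ki.2 == 1%N then p ki.1 1%N - p ki.1.-1 1%N
     else p ki.1 ki.2 - p ki.1 1%N.

Definition cfg_nondegenerate (h : nat) (n : nat -> nat) (p : nat -> nat -> K)
    : Prop :=
  differentiable (force_map h n (p 0%N 1%N)) (cfg_coords h n p) /\
  bijective ('d (force_map h n (p 0%N 1%N)) (cfg_coords h n p)).

End Forces.

Definition ex_type (k : nat) : nat :=
  match k with 1 | 2 => 2 | _ => 1 end.

Definition ex_config (R : realType) (k i : nat) : R[i] :=
  let s : R := Num.sqrt 2 / 2 in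
  match k, i with
  | 0, 1 => 0
  | 1, 1 => (- s)%:C + 'i
  | 1, 2 => s%:C + 'i
  | 2, 1 => (- s)%:C + 2 * 'i
  | 2, 2 => s%:C + 2 * 'i
  | 3, 1 => 3 * 'i
  | _, _ => 0
  end.

(* Main.v *)
Require Import Defs.
From HB Require Import structures.
From mathcomp Require Import all_boot all_order all_algebra.
From mathcomp Require Import all_classical all_reals all_analysis.
From mathcomp Require Import complex ring lra.
Import Order.TTheory GRing.Theory Num.Theory.
Import numFieldNormedType.Exports.
Local Open Scope ring_scope.
Local Open Scope complex_scope.
Section Rules.
Context {K : numFieldType} {V : normedModType K}.
Implicit Types (A B : V -> K) (x : V).

Lemma dcst x (c : K) : is_diff x (fun _ : V => c) (fun _ => 0).
Proof. exact: is_diff_cst. Qed.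
Lemma dD x A B dA dB : is_diff x A dA -> is_diff x B dB ->
  is_diff x (fun y => A y + B y) (fun h => dA h + dB h).
Proof. move=> ha hb; exact: (is_diffD ha hb). Qed.
Lemma dN x A dA : is_diff x A dA -> is_diff x (fun y => - A y) (fun h => - dA h).
Proof. move=> ha; exact: (is_diffN ha). Qed.
Lemma dB x A B dA dB : is_diff x A dA -> is_diff x B dB ->
  is_diff x (fun y => A y - B y) (fun h => dA h - dB h).
Proof. move=> ha hb; exact: (is_diffB ha hb). Qed.
Lemma dMc x (c : K) A dA : is_diff x A dA -> is_diff x (fun y => c * A y) (fun h => c * dA h).
Proof. move=> ha; exact: (is_diffZ c ha). Qed.
Lemma dVc x (c : K) A dA : is_diff x A dA -> A x != 0 ->
  is_diff x (fun y => c / A y) (fun h => c * (- (A x)^-1 * (A x)^-1 * dA h)).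
Proof.
move=> ha hx.
have hv : is_diff x (fun y => (A y)^-1) (fun h => - (A x)^-1 * (A x)^-1 * dA h).
  apply: DiffDef; first exact: differentiableV.
  rewrite diffV // diff_val; apply/funext => h /=.
  by rewrite [_ *: _]/(_ * _) -exprVn expr2 mulNr.
exact: (dMc x c _ _ hv).
Qed.
Lemma dext x (f g : V -> K) D : (forall y, f y = g y) -> is_diff x f D = is_diff x g D.
Proof. by move=> e; rewrite (funext e). Qed.
End Rules.

Section Coord.
Context {K : numFieldType} {n : nat}.
Definition xc (y : 'rV[K]_n.+1) (k : nat) : K := y ord0 (inord k).
Arguments xc : simpl never.
Lemma dxc (x : 'rV[K]_n.+1) k : is_diff x (fun y => xc y k) (fun h => xc h k).
Proof.
have @f : {linear 'rV[K]_n.+1 -> K}.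
  by exists (fun N : 'rV[K]_n.+1 => N ord0 (inord k)); do 2![eexists]; do ?[constructor];
     rewrite ?mxE// => ? *; rewrite ?mxE//; move=> ?; rewrite !mxE.
have fc : continuous f by exact: coord_continuous.
have -> : (fun y : 'rV[K]_n.+1 => xc y k) = f by [].
apply: DiffDef; first exact: linear_differentiable.
by rewrite diff_lin.
Qed.
End Coord.

Section Row.
Context {K : numFieldType} {V : normedModType K} {n : nat}.
Lemma drow x (f D : V -> 'rV[K]_n) :
  (forall j, is_diff x (fun y => f y ord0 j) (fun h => D h ord0 j)) -> is_diff x f D.
Proof.
move=> hj.
have ef : f = \sum_(j < n) (fun y => f y ord0 j *: delta_mx ord0 j).
  by rewrite fct_sumE; apply/funext => y; rewrite [LHS]row_sum_delta.
have eD : D = \sum_(j < n) (fun y => D y ord0 j *: delta_mx ord0 j).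
  by rewrite fct_sumE; apply/funext => y; rewrite [LHS]row_sum_delta.
rewrite ef eD; apply: (big_ind2 (fun a b => is_diff x a b)).
- exact: is_diff_cst.
- by move=> a1 a2 b1 b2 h1 h2; exact: is_diffD.
- move=> j _; have hd := hj j; apply: DiffDef.
    exact: differentiableZl.
  by rewrite diffZl // diff_val.
Qed.
End Row.

Definition row5 {K : numFieldType} (a b c d e : K) : 'rV[K]_(nvars 3 ex_type) :=
  locked (\row_(j < nvars 3 ex_type) nth 0 [:: a; b; c; d; e] j).

Lemma forall5 (P : 'I_(nvars 3 ex_type) -> Prop) :
  P (inord 0) -> P (inord 1) -> P (inord 2) -> P (inord 3) -> P (inord 4) -> forall k, P k.
Proof.
move=> h0 h1 h2 h3 h4 [[|[|[|[|[|k]]]]] hk] //.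
- by have -> : Ordinal hk = inord 0 by apply: val_inj; rewrite /= inordK.
- by have -> : Ordinal hk = inord 1 by apply: val_inj; rewrite /= inordK.
- by have -> : Ordinal hk = inord 2 by apply: val_inj; rewrite /= inordK.
- by have -> : Ordinal hk = inord 3 by apply: val_inj; rewrite /= inordK.
- by have -> : Ordinal hk = inord 4 by apply: val_inj; rewrite /= inordK.
Qed.

Lemma drow5 {K : numFieldType} {V : normedModType K} x (f : V -> 'rV[K]_(nvars 3 ex_type)) d0 d1 d2 d3 d4 :
  is_diff x (fun y => f y ord0 (inord 0)) d0 ->
  is_diff x (fun y => f y ord0 (inord 1)) d1 ->
  is_diff x (fun y => f y ord0 (inord 2)) d2 ->
  is_diff x (fun y => f y ord0 (inord 3)) d3 ->
  is_diff x (fun y => f y ord0 (inord 4)) d4 ->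
  is_diff x f (fun h => row5 (d0 h) (d1 h) (d2 h) (d3 h) (d4 h)).
Proof.
move=> h0 h1 h2 h3 h4; apply: drow; apply: forall5.
- by apply: (is_diff_eq h0); apply/funext => h; rewrite /row5 -lock mxE inordK.
- by apply: (is_diff_eq h1); apply/funext => h; rewrite /row5 -lock mxE inordK.
- by apply: (is_diff_eq h2); apply/funext => h; rewrite /row5 -lock mxE inordK.
- by apply: (is_diff_eq h3); apply/funext => h; rewrite /row5 -lock mxE inordK.
- by apply: (is_diff_eq h4); apply/funext => h; rewrite /row5 -lock mxE inordK.
Qed.

Lemma nv : nvars 3 ex_type = 5%N. Proof. reflexivity. Qed.

Lemma coordE {K : numFieldType} {n} (x : 'rV[K]_n.+1) m : (m < n.+1)%N -> coord_of x m = xc x m.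
Proof.
move=> hm; rewrite /coord_of (nth_map ord0) ?size_enum_ord // /xc; congr (x _ _).
by apply: val_inj; rewrite /= inordK // nth_enum_ord.
Qed.

Lemma cfgx {K : numFieldType} p (x : 'rV[K]_(nvars 3 ex_type)) :
  (config_of 3 ex_type p x 1 1 = p + xc x 0) *
  (config_of 3 ex_type p x 1 2 = p + (xc x 0 + xc x 1)) *
  (config_of 3 ex_type p x 2 1 = p + (xc x 0 + xc x 2)) *
  (config_of 3 ex_type p x 2 2 = p + (xc x 0 + xc x 2 + xc x 3)) *
  (config_of 3 ex_type p x 3 1 = p + (xc x 0 + xc x 2 + xc x 4)) *
  (config_of 3 ex_type p x 0 1 = p).
Proof.
rewrite /config_of /index_iota /= !big_cons !big_nil /= !coordE //.
do !split; ring.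
Qed.

Lemma row5x {K : numFieldType} (a b c d e : K) :
  (xc (row5 a b c d e) 0 = a) * (xc (row5 a b c d e) 1 = b) * (xc (row5 a b c d e) 2 = c) *
  (xc (row5 a b c d e) 3 = d) * (xc (row5 a b c d e) 4 = e).
Proof. by rewrite /xc /row5 -lock !mxE !inordK. Qed.

Lemma rowP5 {K : numFieldType} (u v : 'rV[K]_(nvars 3 ex_type)) :
  xc u 0 = xc v 0 -> xc u 1 = xc v 1 -> xc u 2 = xc v 2 -> xc u 3 = xc v 3 -> xc u 4 = xc v 4 -> u = v.
Proof. by move=> *; apply/rowP; apply: forall5. Qed.

Ltac dtac := lazymatch goal with
 | |- is_diff _ (fun y => @?c y * (@?A y)^-1) _ => eapply dVc; [dtac|]
 | |- is_diff _ (fun y => @?A y + @?B y) _ => eapply dD; [dtac|dtac]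
 | |- is_diff _ (fun y => - @?A y) _ => eapply dN; dtac
 | |- is_diff _ (fun y => @?c y * @?A y) _ => eapply dMc; dtac
 | |- is_diff _ (fun y => xc _ _) _ => eapply dxc
 | |- _ => eapply dcst end.

Section A.
Variable R : realType.
Definition r : R[i] := locked (Num.sqrt (2:R))%:C.
Lemma rC : r = Complex (Num.sqrt 2) 0.
Proof. by rewrite /r -lock. Qed.
Lemma hr : r ^+ 2 = 2.
Proof. by rewrite /r -lock -rmorphXn sqr_sqrtr ?ler0n // rmorph_nat. Qed.
Lemma hI : 'i ^+ 2 = -1 :> R[i].
Proof. exact: sqr_i. Qed.
Lemma natC n : (n%:R : R[i]) = Complex n%:R 0.
Proof. by rewrite -(rmorph_nat (real_complex R)). Qed.
Lemma inv2C : (2 : R[i])^-1 = Complex 2^-1 0.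
Proof. by rewrite -(rmorph_nat (real_complex R)) -fmorphV. Qed.
Lemma sq2 : 0 < Num.sqrt (2:R).
Proof. by rewrite sqrtr_gt0. Qed.
Lemma cfgE : (ex_config R 0 1 = 0) * (ex_config R 1 1 = -(r/2) + 'i) * (ex_config R 1 2 = r/2 + 'i)
  * (ex_config R 2 1 = -(r/2) + 2 * 'i) * (ex_config R 2 2 = r/2 + 2 * 'i) * (ex_config R 3 1 = 3 * 'i).
Proof.
have e : forall x : R, (x/2)%:C = x%:C / 2 :> R[i] by move=> x; rewrite rmorphM /= fmorphV rmorph_nat.
have eN : forall x : R, (-x)%:C = - x%:C :> R[i] by move=> x; exact: rmorphN.
by rewrite /ex_config /r -lock !eN !e; do !split.
Qed.

Ltac nzc0 := apply/negP => /eqP; rewrite ?inv2C ?natC ?rC; simpc; let h := fresh in move=> h;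
  have := congr1 (@complex.Re _) h; have := congr1 (@complex.Im _) h; rewrite /=; have := sq2; lra.
Ltac nzc := first [ by rewrite ?pnatr_eq0 | nzc0 ].
Ltac fld := have hr := hr; have hI := hI; field: hr hI; repeat (apply/andP; split); nzc.

Lemma bal : cfg_balanced 3 ex_type (ex_config R).
Proof.
move=> k i /andP[k1 k2] /andP[i1 i2].
case: k k1 k2 i2 => [|[|[|]]] //= _ _ i2;
case: i i1 i2 => [|[|[|]]] //= _ _;
rewrite /Fforce /cw [ex_config]lock /= /index_iota /= !big_cons !big_nil /= -lock !cfgE; fld.
Qed.

Lemma resid : cfg_residual_force 3 ex_type (ex_config R) = 2 / ((3 : R[i]) * 'i).
Proof.
rewrite /cfg_residual_force /Fforce /cw [ex_config]lock /= /index_iota /= !big_cons !big_nil /= -lock !cfgE; fld.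
Qed.

Definition x0 := locked (cfg_coords 3 ex_type (ex_config R)).
Lemma x0E : (xc x0 0 = ex_config R 1 1 - ex_config R 0 1) *
  (xc x0 1 = ex_config R 1 2 - ex_config R 1 1) *
  (xc x0 2 = ex_config R 2 1 - ex_config R 1 1) *
  (xc x0 3 = ex_config R 2 2 - ex_config R 2 1) *
  (xc x0 4 = ex_config R 3 1 - ex_config R 2 1).
Proof. by rewrite /x0 -lock /xc /cfg_coords [ex_config]lock !mxE !inordK. Qed.

Definition q k i := locked (ex_config R k i).
Lemma qE k i : q k i = ex_config R k i. Proof. by rewrite /q -lock. Qed.
Lemma xs3a : xc x0 0 + xc x0 2 + xc x0 3 = q 2 2.
Proof. by rewrite qE !x0E /=; ring. Qed.
Lemma xs3b : xc x0 0 + xc x0 2 + xc x0 4 = q 3 1.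
Proof. by rewrite qE !x0E /=; ring. Qed.
Lemma xs2a : xc x0 0 + xc x0 1 = q 1 2.
Proof. by rewrite qE !x0E /=; ring. Qed.
Lemma xs2b : xc x0 0 + xc x0 2 = q 2 1.
Proof. by rewrite qE !x0E /=; ring. Qed.
Lemma xs1 : xc x0 0 = q 1 1.
Proof. by rewrite qE !x0E /=; ring. Qed.
Ltac xsum := rewrite ?xs3a ?xs3b ?xs2a ?xs2b ?xs1.

Lemma invE (x y : R[i]) : x * y = 1 -> x^-1 = y.
Proof.
move=> h; have hx : x != 0 by apply/eqP => e; move: h; rewrite e mul0r => /eqP; rewrite eq_sym oner_eq0.
by rewrite -[y]mul1r -(mulVf hx) -mulrA h mulr1.
Qed.
Lemma iv0 : (0 + q 1 1 - 0)^-1 = (-(1%:R/3%:R) * r + -(2%:R/3%:R) * 'i).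
Proof. by apply: invE; rewrite !qE !cfgE; fld. Qed.
Lemma iv1 : (0 + q 1 2 - 0)^-1 = ((1%:R/3%:R) * r + -(2%:R/3%:R) * 'i).
Proof. by apply: invE; rewrite !qE !cfgE; fld. Qed.
Lemma iv2 : (0 + q 1 2 - (0 + q 1 1))^-1 = ((1%:R/2%:R) * r).
Proof. by apply: invE; rewrite !qE !cfgE; fld. Qed.
Lemma iv3 : (0 + q 1 2 - (0 + q 2 1))^-1 = ((1%:R/3%:R) * r + (1%:R/3%:R) * 'i).
Proof. by apply: invE; rewrite !qE !cfgE; fld. Qed.
Lemma iv4 : (0 + q 1 2 - (0 + q 2 2))^-1 = (1%:R * 'i).
Proof. by apply: invE; rewrite !qE !cfgE; fld. Qed.
Lemma iv5 : (0 + q 2 1 - (0 + q 1 1))^-1 = (-1%:R * 'i).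
Proof. by apply: invE; rewrite !qE !cfgE; fld. Qed.
Lemma iv6 : (0 + q 2 1 - (0 + q 1 2))^-1 = (-(1%:R/3%:R) * r + -(1%:R/3%:R) * 'i).
Proof. by apply: invE; rewrite !qE !cfgE; fld. Qed.
Lemma iv7 : (0 + q 2 2 - (0 + q 1 1))^-1 = ((1%:R/3%:R) * r + -(1%:R/3%:R) * 'i).
Proof. by apply: invE; rewrite !qE !cfgE; fld. Qed.
Lemma iv8 : (0 + q 2 2 - (0 + q 1 2))^-1 = (-1%:R * 'i).
Proof. by apply: invE; rewrite !qE !cfgE; fld. Qed.
Lemma iv9 : (0 + q 2 2 - (0 + q 2 1))^-1 = ((1%:R/2%:R) * r).
Proof. by apply: invE; rewrite !qE !cfgE; fld. Qed.
Lemma iv10 : (0 + q 2 2 - (0 + q 3 1))^-1 = ((1%:R/3%:R) * r + (2%:R/3%:R) * 'i).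
Proof. by apply: invE; rewrite !qE !cfgE; fld. Qed.
Lemma iv11 : (0 + q 3 1 - (0 + q 2 1))^-1 = ((1%:R/3%:R) * r + -(2%:R/3%:R) * 'i).
Proof. by apply: invE; rewrite !qE !cfgE; fld. Qed.
Lemma iv12 : (0 + q 3 1 - (0 + q 2 2))^-1 = (-(1%:R/3%:R) * r + -(2%:R/3%:R) * 'i).
Proof. by apply: invE; rewrite !qE !cfgE; fld. Qed.
Definition ivs := (iv0, iv1, iv2, iv3, iv4, iv5, iv6, iv7, iv8, iv9, iv10, iv11, iv12).


Definition Fm := force_map 3 ex_type (ex_config R 0 1).

Definition L0 (a b c d e : R[i]) : R[i] := ((59%:R/24%:R) + (7%:R/6%:R) * r * 'i) * a + ((7%:R/12%:R) + (7%:R/6%:R) * r * 'i) * b + (-(7%:R/12%:R) + -(5%:R/12%:R) * r * 'i) * c + ((1%:R/12%:R) + (1%:R/6%:R) * r * 'i) * d + (-(3%:R/8%:R)) * e.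
Definition L1 (a b c d e : R[i]) : R[i] := (-(7%:R/12%:R) + -(7%:R/6%:R) * r * 'i) * a + (-(7%:R/6%:R)) * b + ((1%:R/2%:R) + -(1%:R/6%:R) * r * 'i) * c + (-(1%:R/6%:R)) * d + ((1%:R/12%:R) + -(1%:R/6%:R) * r * 'i) * e.
Definition L2 (a b c d e : R[i]) : R[i] := (-(7%:R/12%:R) + -(5%:R/12%:R) * r * 'i) * a + (-(1%:R/2%:R) + (1%:R/6%:R) * r * 'i) * b + ((8%:R/3%:R)) * c + ((1%:R/2%:R) + (1%:R/6%:R) * r * 'i) * d + (-(7%:R/12%:R) + (5%:R/12%:R) * r * 'i) * e.
Definition L3 (a b c d e : R[i]) : R[i] := (-(1%:R/12%:R) + -(1%:R/6%:R) * r * 'i) * a + (-(1%:R/6%:R)) * b + (-(1%:R/2%:R) + -(1%:R/6%:R) * r * 'i) * c + (-(7%:R/6%:R)) * d + ((7%:R/12%:R) + -(7%:R/6%:R) * r * 'i) * e.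
Definition L4 (a b c d e : R[i]) : R[i] := (-(3%:R/8%:R)) * a + (-(1%:R/12%:R) + (1%:R/6%:R) * r * 'i) * b + (-(7%:R/12%:R) + (5%:R/12%:R) * r * 'i) * c + (-(7%:R/12%:R) + (7%:R/6%:R) * r * 'i) * d + ((59%:R/24%:R) + -(7%:R/6%:R) * r * 'i) * e.
Definition ginv (y : 'rV[R[i]]_(nvars 3 ex_type)) : 'rV[R[i]]_(nvars 3 ex_type) :=
  row5 (L0 (xc y 0) (xc y 1) (xc y 2) (xc y 3) (xc y 4)) (L1 (xc y 0) (xc y 1) (xc y 2) (xc y 3) (xc y 4)) (L2 (xc y 0) (xc y 1) (xc y 2) (xc y 3) (xc y 4)) (L3 (xc y 0) (xc y 1) (xc y 2) (xc y 3) (xc y 4)) (L4 (xc y 0) (xc y 1) (xc y 2) (xc y 3) (xc y 4)).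


Lemma xc_ginv y :
  (xc (ginv y) 0 = L0 (xc y 0) (xc y 1) (xc y 2) (xc y 3) (xc y 4)) *
  (xc (ginv y) 1 = L1 (xc y 0) (xc y 1) (xc y 2) (xc y 3) (xc y 4)) *
  (xc (ginv y) 2 = L2 (xc y 0) (xc y 1) (xc y 2) (xc y 3) (xc y 4)) *
  (xc (ginv y) 3 = L3 (xc y 0) (xc y 1) (xc y 2) (xc y 3) (xc y 4)) *
  (xc (ginv y) 4 = L4 (xc y 0) (xc y 1) (xc y 2) (xc y 3) (xc y 4)).
Proof. by rewrite /ginv !row5x. Qed.

Lemma bij5 (d0 d1 d2 d3 d4 : 'rV[R[i]]_(nvars 3 ex_type) -> R[i]) :
  (forall h, L0 (d0 h) (d1 h) (d2 h) (d3 h) (d4 h) = xc h 0) ->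
  (forall h, L1 (d0 h) (d1 h) (d2 h) (d3 h) (d4 h) = xc h 1) ->
  (forall h, L2 (d0 h) (d1 h) (d2 h) (d3 h) (d4 h) = xc h 2) ->
  (forall h, L3 (d0 h) (d1 h) (d2 h) (d3 h) (d4 h) = xc h 3) ->
  (forall h, L4 (d0 h) (d1 h) (d2 h) (d3 h) (d4 h) = xc h 4) ->
  (forall y, d0 (ginv y) = xc y 0) -> (forall y, d1 (ginv y) = xc y 1) ->
  (forall y, d2 (ginv y) = xc y 2) -> (forall y, d3 (ginv y) = xc y 3) ->
  (forall y, d4 (ginv y) = xc y 4) ->
  bijective (fun h => row5 (d0 h) (d1 h) (d2 h) (d3 h) (d4 h)).
Proof.
move=> a0 a1 a2 a3 a4 b0 b1 b2 b3 b4; exists ginv => [h|y]; apply: rowP5.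
all: rewrite ?xc_ginv !row5x //.
Qed.

Lemma nondeg : cfg_nondegenerate 3 ex_type (ex_config R).
Proof.
suff [D [HD HB]] : exists D, is_diff x0 Fm D /\ bijective D.
  move: HD; rewrite /x0 -lock => HD.
  split; first exact: ex_diff.
  by rewrite diff_val.
eexists; split.
{ eapply (@drow5 _ _ x0 Fm).
  all: under dext => y do rewrite /Fm /force_map mxE inordK //= /Gforce /Fforce /cw [config_of]lock /index_iota /= !big_cons !big_nil /= -lock !cfgx.
  all: dtac.
  all: xsum; rewrite !qE !cfgE; nzc. }
cbv beta. xsum; rewrite !ivs.
apply: bij5.
all: try (move=> h; rewrite /L0 /L1 /L2 /L3 /L4; cbv beta; fld).
all: move=> y; cbv beta; rewrite !xc_ginv /L0 /L1 /L2 /L3 /L4; fld.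
Qed.

End A.

Theorem proposition3p4 (R : realType) :
  cfg_balanced 3 ex_type (ex_config R) /\
  cfg_nondegenerate 3 ex_type (ex_config R) /\
  cfg_residual_force 3 ex_type (ex_config R) = 2 / ((3 : R[i]) * 'i).
Proof. split; [exact: bal | split; [exact: nondeg | exact: resid]]. Qed.
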